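(* Let $M=\begin{pmatrix}g_{11}&g_{12}\\-\det(M)(1+t^{-1}+t)\overline{g_{12}}&\det(M)\overline{g_{11}}\end{pmatrix}\in\mathrm{GL}(2,\mathbb{Z}[t,t^{-1}])$ satisfy $\det(M)=(-t)^k$ for some integer $k$. Then $M\in\phi(\mathcal{B})$ if and only if $g_{11}|_{t=\zeta_3}=1$, where $\zeta_3$ is a complex number with $\zeta_3^2+\zeta_3+1=0$.
   Context: For a Laurent polynomial (or matrix) in $t$, the bar denotes substitution $t\mapsto t^{-1}$. Let $J_3=\begin{pmatrix}1&-t^{-1}&-t^{-1}\\-t&1&-t^{-1}\\-t&-t&1\end{pmatrix}$, $v=(t,t^2,t^3)$ (a row vector) and $\vec{1}=(1,1,1)^T$. The formal Burau group is $\mathcal{B}=\{A\in\mathrm{GL}(3,\mathbb{Z}[t,t^{-1}]) : vA=v,\ A\vec 1=\vec 1,\ \overline{A}J_3A^T=J_3\}$. For $A=(A_{ij})\in\mathcal{B}$ put, for $k=1,2$, $f_{k1}=A_{k1}(1+t+t^2)-1$, $f_{k2}=A_{k1}+A_{k2}(1+t)-1$, and $g_{kl}=f_{kl}/(t(1+t))$ (here $g_{kl}$ refers to these quantities computed from $A$). Define $\phi(A)=\begin{pmatrix}g_{11}&g_{12}\\ t^{-1}g_{11}+(1+t)g_{21}& t^{-1}g_{12}+(1+t)g_{22}\end{pmatrix}$. *)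

(* Defs.v *)
(* Z[t,t^-1] is realised inside the fraction field
   F = Frac(Z[t]) of the integer polynomial ring; t = 'X. *)
From HB Require Import structures.
From mathcomp Require Import all_boot all_order all_algebra all_field.
Set Implicit Arguments. Unset Strict Implicit. Unset Printing Implicit Defensive.
Import Order.TTheory GRing.Theory Num.Theory.
Local Open Scope ring_scope.

Notation F := {fraction {poly int}}.
Notation "x %:F" := (@FracField.tofrac _ x) : ring_scope.

Definition tt : F := ('X : {poly int})%:F.

Definition laurent (x : F) : Prop :=
  exists (n : nat) (p : {poly int}), x = p%:F / tt ^+ n.

Definition subst_inv (q : {poly int}) : F :=
  (map_poly (fun c : int => (c%:P : {poly int})%:F) q).[tt^-1].

(* bar : t |-> t^-1, on the whole fraction field:
   bar (a/b) = a(t^-1)/b(t^-1), computed on the canonical representative *)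
Definition bar (x : F) : F :=
  let r := repr x in subst_inv \n_r / subst_inv \d_r.

Definition barmx (m n : nat) (A : 'M[F]_(m, n)) : 'M[F]_(m, n) := map_mx bar A.

Definition inGL (n : nat) (A : 'M[F]_n) : Prop :=
  (forall i j, laurent (A i j)) /\
  exists B : 'M[F]_n, (forall i j, laurent (B i j)) /\
    A *m B = 1%:M /\ B *m A = 1%:M.

Definition J3 : 'M[F]_3 :=
  \matrix_(i < 3, j < 3)
    (if (val i == val j) then 1 else if (val i < val j)%N then - tt^-1 else - tt).

Definition vrow : 'rV[F]_3 := \row_(j < 3) tt ^+ (val j).+1.

Definition ones : 'cV[F]_3 := const_mx 1.

Definition burau (A : 'M[F]_3) : Prop :=
  inGL A /\ vrow *m A = vrow /\ A *m ones = ones /\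
  barmx A *m J3 *m A^T = J3.

Definition i0 : 'I_3 := @Ordinal 3 0 isT.
Definition i1 : 'I_3 := @Ordinal 3 1 isT.

Definition mx2 (a b c d : F) : 'M[F]_2 :=
  \matrix_(i < 2, j < 2)
    (if val i == 0%N then (if val j == 0%N then a else b)
     else (if val j == 0%N then c else d)).

Definition fkl (A : 'M[F]_3) (k : 'I_3) (l : nat) : F :=
  if l == 1%N then A k i0 * (1 + tt + tt ^+ 2) - 1
  else A k i0 + A k i1 * (1 + tt) - 1.

Definition gkl (A : 'M[F]_3) (k : 'I_3) (l : nat) : F :=
  fkl A k l / (tt * (1 + tt)).

Definition phi (A : 'M[F]_3) : 'M[F]_2 :=
  mx2 (gkl A i0 1) (gkl A i0 2)
      (tt^-1 * gkl A i0 1 + (1 + tt) * gkl A i1 1)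
      (tt^-1 * gkl A i0 2 + (1 + tt) * gkl A i1 2).

Definition in_phiB (M : 'M[F]_2) : Prop := exists A, burau A /\ phi A = M.

Definition laurent_eval (zeta : algC) (x : F) (z : algC) : Prop :=
  exists (n : nat) (p : {poly int}),
    x = p%:F / tt ^+ n /\
    (map_poly (fun c : int => c%:~R : algC) p).[zeta] / zeta ^+ n = z.

(* the matrix M of the statement, with det(M) replaced by (-t)^k *)
Definition Mform (g11 g12 : F) (k : int) : 'M[F]_2 :=
  mx2 g11 g12 (- ((- tt) ^ k) * (1 + tt^-1 + tt) * bar g12)
      ((- tt) ^ k * bar g11).

(* Main.v *)
Require Import Defs.
From HB Require Import structures.
From mathcomp Require Import all_boot all_order all_algebra all_field.
From mathcomp Require Import zify ring lra.
Import Order.TTheory GRing.Theory Num.Theory.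
Local Open Scope ring_scope.

Module GenAlg.
Set Implicit Arguments. Unset Strict Implicit.

Section Gen.
Variable K : fieldType.
Implicit Types t u a b ab bb : K.

Definition e11 t a : K := (t * (1 + t) * a + 1) / (1 + t + t ^+ 2).
Definition e12 t a b : K := (t * (1 + t) * b + 1 - e11 t a) / (1 + t).
Definition e21 t u a bb : K :=
  (t * (- (u * (1 + t^-1 + t) * bb)) - a + 1) / (1 + t + t ^+ 2).
Definition e22 t u a b ab bb : K :=
  (t * (u * ab) - b + 1 - e21 t u a bb) / (1 + t).

Definition Amat t u a b ab bb : 'M[K]_3 :=
  \matrix_(i < 3, j < 3)
    let x1 := if val j == 0%N then e11 t a else if val j == 1%N then e12 t a b
              else 1 - e11 t a - e12 t a b in
    let x2 := if val j == 0%N then e21 t u a bb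
              else if val j == 1%N then e22 t u a b ab bb
              else 1 - e21 t u a bb - e22 t u a b ab bb in
    if val i == 0%N then x1 else if val i == 1%N then x2
    else (t ^+ (val j).+1 - t * x1 - t ^+ 2 * x2) / t ^+ 3.

Definition Jm t : 'M[K]_3 :=
  \matrix_(i < 3, j < 3)
    (if (val i == val j) then 1 else if (val i < val j)%N then - t^-1 else - t).

Lemma unitA t u a b ab bb : t != 0 -> u != 0 -> 1 + t != 0 -> 1 + t + t ^+ 2 != 0 ->
  a * ab + (t + 1 + t^-1) * b * bb = 1 ->
  Amat t^-1 u^-1 ab bb a b *m Jm t *m (Amat t u a b ab bb)^T = Jm t.
Proof.
move=> t0 u0 s0 P0 D.
have s0' : 1 + t^-1 != 0.
  have -> : 1 + t^-1 = (1 + t) / t by field.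
  by rewrite mulf_neq0 // invr_neq0.
have P0' : 1 + t^-1 + t^-1 ^+ 2 != 0.
  have -> : 1 + t^-1 + t^-1 ^+ 2 = (1 + t + t ^+ 2) / t ^+ 2 by field.
  by rewrite mulf_neq0 // invr_neq0 // expf_neq0.
have c0 : t + 1 + t^-1 != 0.
  have -> : t + 1 + t^-1 = (1 + t + t ^+ 2) / t by field.
  by rewrite mulf_neq0 // invr_neq0.
have [a0|a0] := eqVneq a 0.
{
  have b0 : b != 0.
    apply/eqP => b0; move: D; rewrite a0 b0 !(mul0r, mulr0) add0r => /eqP.
    by rewrite eq_sym oner_eq0.
  have ebb : bb = ((t + 1 + t^-1) * b)^-1.
    have cb0 : (t + 1 + t^-1) * b != 0 by rewrite mulf_neq0.
    apply: (mulfI cb0); rewrite mulfV //.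
    by move: D; rewrite a0 mul0r add0r.
  subst a bb.
  apply/matrixP => i j.
  rewrite !(mxE, big_ord_recr, big_ord0) /=.
  rewrite /e22 /e12 /e21 /e11.
  case: i => [[|[|[|?]]] ?] //=; case: j => [[|[|[|?]]] ?] //=.
  all: field.
  all: by rewrite ?t0 ?s0 ?P0 ?b0 ?u0 ?oner_neq0.
}
have eab : ab = (1 - (t + 1 + t^-1) * b * bb) / a.
  apply: (mulfI a0); rewrite mulrCA mulfV // mulr1.
  by rewrite -[X in X - _]D addrK.
subst ab.
apply/matrixP => i j.
rewrite !(mxE, big_ord_recr, big_ord0) /=.
rewrite /e22 /e12 /e21 /e11.
case: i => [[|[|[|?]]] ?] //=; case: j => [[|[|[|?]]] ?] //=.
all: field.
all: by rewrite ?t0 ?s0 ?P0 ?a0 ?u0 ?oner_neq0.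
Qed.
  
Lemma detA t u a b ab bb : t != 0 -> u != 0 -> 1 + t != 0 -> 1 + t + t ^+ 2 != 0 ->
  a * ab + (t + 1 + t^-1) * b * bb = 1 -> \det (Amat t u a b ab bb) = u.
Proof.
move=> t0 u0 s0 P0 D.
rewrite (expand_det_row _ ord0) !big_ord_recr big_ord0 /= /cofactor.
rewrite !(expand_det_row _ ord0) !big_ord_recr !big_ord0 /= /cofactor !det_mx11.
rewrite !mxE /= /bump /= /e22 /e12 /e21 /e11.
have [a0|a0] := eqVneq a 0.
  have b0 : b != 0.
    apply/eqP => b0; move: D; rewrite a0 b0 !(mul0r, mulr0) add0r => /eqP.
    by rewrite eq_sym oner_eq0.
  have c0 : t + 1 + t^-1 != 0.
    have -> : t + 1 + t^-1 = (1 + t + t ^+ 2) / t by field.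
    by rewrite mulf_neq0 // invr_neq0.
  have ebb : bb = ((t + 1 + t^-1) * b)^-1.
    have cb0 : (t + 1 + t^-1) * b != 0 by rewrite mulf_neq0.
    apply: (mulfI cb0); rewrite mulfV //.
    by move: D; rewrite a0 mul0r add0r.
  subst a bb.
  field.
  by rewrite ?t0 ?s0 ?P0 ?b0 ?u0 ?oner_neq0.
have eab : ab = (1 - (t + 1 + t^-1) * b * bb) / a.
  apply: (mulfI a0); rewrite mulrCA mulfV // mulr1.
  by rewrite -[X in X - _]D addrK.
subst ab.
field.
by rewrite ?t0 ?s0 ?P0 ?a0 ?u0 ?oner_neq0.
Qed.

Lemma vA t u a b ab bb : t != 0 -> 1 + t != 0 -> 1 + t + t ^+ 2 != 0 ->
  (\row_(j < 3) t ^+ (val j).+1) *m Amat t u a b ab bb = \row_(j < 3) t ^+ (val j).+1.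
Proof.
move=> t0 s0 P0; apply/matrixP => i j.
rewrite !(mxE, big_ord_recr, big_ord0) /= /e22 /e12 /e21 /e11.
case: j => [[|[|[|?]]] ?] //=; field; by rewrite ?t0 ?s0 ?P0.
Qed.

Lemma Aones t u a b ab bb : t != 0 -> 1 + t != 0 -> 1 + t + t ^+ 2 != 0 ->
  Amat t u a b ab bb *m (const_mx 1 : 'cV[K]_3) = const_mx 1.
Proof.
move=> t0 s0 P0; apply/matrixP => i j.
rewrite !(mxE, big_ord_recr, big_ord0) /= /e22 /e12 /e21 /e11.
case: i => [[|[|[|?]]] ?] //=; field; by rewrite ?t0 ?s0 ?P0.
Qed.

Lemma e11h t h : 1 + t + t ^+ 2 != 0 ->
  e11 t (1 + (1 + t + t ^+ 2) * h) = 1 + t * (1 + t) * h.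
Proof. by move=> P0; rewrite /e11; field. Qed.

Lemma e12h t h b : 1 + t != 0 -> 1 + t + t ^+ 2 != 0 ->
  e12 t (1 + (1 + t + t ^+ 2) * h) b = t * b - t * h.
Proof. by move=> s0 P0; rewrite /e12 /e11; field; rewrite s0 P0. Qed.

Lemma e21h t u h bb : t != 0 -> 1 + t + t ^+ 2 != 0 ->
  e21 t u (1 + (1 + t + t ^+ 2) * h) bb = - (u * bb) - h.
Proof. by move=> t0 P0; rewrite /e21; field; rewrite t0 P0. Qed.

Lemma e22h t u h hb b bb : t != 0 -> 1 + t != 0 -> 1 + t + t ^+ 2 != 0 ->
  e22 t u (1 + (1 + t + t ^+ 2) * h) b (1 + (1 + t^-1 + t^-1 ^+ 2) * hb) bb =
  (1 - u) / (1 + t) + u - (b - bb) / (1 + t) - (1 - u) / (1 + t) * bb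
  + (h - hb) / (1 + t) + (1 - u) / (1 + t) * hb + u * t^-1 * (1 + t) * hb.
Proof. by move=> t0 s0 P0; rewrite /e22 /e21; field; rewrite t0 s0 P0. Qed.

Lemma map_Amat (f : {rmorphism K -> K}) t u a b ab bb :
  map_mx f (Amat t u a b ab bb) = Amat (f t) (f u) (f a) (f b) (f ab) (f bb).
Proof.
apply/matrixP => i j; rewrite !mxE /e22 /e12 /e21 /e11.
case: i => [[|[|[|?]]] ?] //=; case: j => [[|[|[|?]]] ?] //=;
  by rewrite ?(rmorphB, rmorphD, rmorphN, rmorphM, fmorphV, rmorphXn, rmorph1).
Qed.

Lemma gL2z (w s : K) : w != 0 -> s != 0 -> (1 - w^-1) / s = - w^-1 * ((1 - w) / s).
Proof. by move=> w0 s0; field; rewrite w0 s0. Qed.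

Lemma gLpoly t P S C : t != 0 -> 1 + t != 0 ->
  (P * t + C - (S * t^-1 + C)) / (1 + t) = t * ((P - S) / (1 + t)) + S * (1 - t^-1).
Proof. by move=> t0 s0; field; rewrite t0 s0. Qed.

Lemma gL1 (w s P S : K) : w != 0 -> s != 0 ->
  (P / w - S * w) / s = w^-1 * ((P - S) / s) + S * w^-1 * ((1 - w ^+ 2) / s).
Proof. by move=> w0 s0; field; rewrite w0 s0. Qed.
End Gen.

Section Gen2.
Variable K : fieldType.

Lemma gH (P w D Ph : K) : w != 0 -> Ph != 0 -> P - w = D * Ph -> (P / w - 1) / Ph = D / w.
Proof.
move=> w0 P0 e.
have -> : P = D * Ph + w by rewrite -e subrK.
by field; rewrite w0 P0.
Qed.

Lemma gE (P w Q v t Ph : K) : w != 0 -> v != 0 -> t != 0 -> 1 + t != 0 ->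
  P / w = (Q / v * Ph - 1) / (t * (1 + t)) ->
  P * v * (t * (1 + t)) = Q * Ph * w - w * v.
Proof.
move=> w0 v0 t0 s0 e.
have -> : P = P / w * w by rewrite mulfVK.
rewrite e; field; by rewrite ?w0 ?v0 ?t0 ?s0.
Qed.

Lemma gZ (z pz qz : K) m n : z ^+ 2 + z + 1 = 0 ->
  pz * z ^+ m * (z * (1 + z)) = qz * (z ^+ 2 + z + 1) * z ^+ n - z ^+ n * z ^+ m ->
  pz / z ^+ n = 1.
Proof.
move=> hz e.
have z0 : z != 0 by apply/eqP => z0; move: hz; rewrite z0 expr0n /= !add0r => /eqP; rewrite oner_eq0.
have e1 : z * (1 + z) = -1 by rewrite -(subr0 (z * (1 + z))) -hz; ring.
move: e; rewrite e1 hz mulr0 mul0r sub0r mulrN1 => /eqP; rewrite eqr_opp => /eqP e.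
have : pz = z ^+ n.
  by apply: (mulIf (expf_neq0 m z0)).
by move=> ->; rewrite divff // expf_neq0.
Qed.
End Gen2.

Lemma gR (R : numDomainType) (z : R) (r0 r1 : int) : z ^+ 2 + z + 1 = 0 ->
  r0%:~R + r1%:~R * z = 0 -> r0 = 0 /\ r1 = 0.
Proof.
move=> hz he.
have E : ((r0 ^+ 2 - r0 * r1 + r1 ^+ 2)%:~R : R) =
   (r0%:~R + r1%:~R * z) * (r0%:~R + r1%:~R * z ^+ 2)
   - (r0%:~R * r1%:~R + r1%:~R ^+ 2 * (z - 1)) * (z ^+ 2 + z + 1).
  by ring.
move: E; rewrite he hz mul0r mulr0 subr0 => /eqP; rewrite intr_eq0 => /eqP E.
by split; nia.
Qed.

Section Gen3.
Variable K : fieldType.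
Implicit Types t u a b ab bb : K.

Lemma gphi1 t a : t != 0 -> 1 + t != 0 -> 1 + t + t ^+ 2 != 0 ->
  (e11 t a * (1 + t + t ^+ 2) - 1) / (t * (1 + t)) = a.
Proof. by move=> t0 s0 P0; rewrite /e11; field; rewrite ?t0 ?s0 ?P0. Qed.

Lemma gphi2 t a b : t != 0 -> 1 + t != 0 -> 1 + t + t ^+ 2 != 0 ->
  (e11 t a + e12 t a b * (1 + t) - 1) / (t * (1 + t)) = b.
Proof. by move=> t0 s0 P0; rewrite /e12 /e11; field; rewrite ?t0 ?s0 ?P0. Qed.

Lemma gphi3 t u a bb : t != 0 -> 1 + t != 0 -> 1 + t + t ^+ 2 != 0 ->
  t^-1 * ((e11 t a * (1 + t + t ^+ 2) - 1) / (t * (1 + t))) +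
  (1 + t) * ((e21 t u a bb * (1 + t + t ^+ 2) - 1) / (t * (1 + t))) =
  - u * (1 + t^-1 + t) * bb.
Proof. by move=> t0 s0 P0; rewrite /e21 /e11; field; rewrite ?t0 ?s0 ?P0. Qed.

Lemma gphi4 t u a b ab bb : t != 0 -> 1 + t != 0 -> 1 + t + t ^+ 2 != 0 ->
  t^-1 * ((e11 t a + e12 t a b * (1 + t) - 1) / (t * (1 + t))) +
  (1 + t) * ((e21 t u a bb + e22 t u a b ab bb * (1 + t) - 1) / (t * (1 + t))) =
  u * ab.
Proof. by move=> t0 s0 P0; rewrite /e22 /e21 /e12 /e11; field; rewrite ?t0 ?s0 ?P0. Qed.

Lemma gD t u a b ab bb : u != 0 ->
  0 + a * ((-1) ^+ (0 + 0) * (u * ab)) +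
  b * ((-1) ^+ (0 + 1) * (- u * (1 + t^-1 + t) * bb)) = u ->
  a * ab + (t + 1 + t^-1) * b * bb = 1.
Proof.
move=> u0; rewrite !add0n expr0 expr1 => e.
apply: (mulfI u0); rewrite mulr1 -[RHS]e; ring.
Qed.

Lemma eq_hP (a P : K) : P != 0 -> a = 1 + P * ((a - 1) / P).
Proof. by move=> P0; rewrite mulrC (divfK P0) addrC subrK. Qed.

End Gen3.

End GenAlg.
Import GenAlg.

Lemma fracE (x : F) : x = (\n_(repr x))%:F / (\d_(repr x))%:F.
Proof.
have hd : (\d_(repr x)) != 0 := denom_ratioP _.
apply: (@mulIf _ (\d_(repr x))%:F); first by rewrite tofrac_eq0.
rewrite mulfVK ?tofrac_eq0 //.
move: hd; set r := repr x => hd.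
have -> : x = (\pi_({fraction {poly int}}) r)%qT by rewrite /r reprK.
unlock FracField.tofrac => /=.
rewrite -[_ * _]/(FracField.mul _ _) -FracField.pi_mul.
apply/eqmodP; rewrite /= FracField.equivfE /FracField.mulf.
rewrite !numden_Ratio ?oner_eq0 ?mulf_neq0 //.
rewrite !mulr1 mulrC //.
all: exact: oner_neq0.
Qed.

Lemma tt_neq0 : tt != 0.
Proof. by rewrite /tt tofrac_eq0 polyX_eq0. Qed.

Lemma si_E q : subst_inv q = (map_poly intr q).[tt^-1].
Proof.
rewrite /subst_inv; congr horner; apply: eq_map_poly => c /=.
by rewrite -[c in c%:P]intz !rmorph_int.
Qed.

Lemma siD p q : subst_inv (p + q) = subst_inv p + subst_inv q.
Proof. by rewrite !si_E rmorphD hornerD. Qed.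
Lemma siB p q : subst_inv (p - q) = subst_inv p - subst_inv q.
Proof. by rewrite !si_E rmorphB hornerD hornerN. Qed.
Lemma siM p q : subst_inv (p * q) = subst_inv p * subst_inv q.
Proof. by rewrite !si_E rmorphM hornerM. Qed.
Lemma siC c : subst_inv c%:P = c%:~R.
Proof. by rewrite si_E map_polyC hornerC. Qed.
Lemma si1 : subst_inv 1 = 1.
Proof. by rewrite si_E rmorph1 hornerC. Qed.
Lemma siX : subst_inv 'X = tt^-1.
Proof. by rewrite si_E map_polyX hornerX. Qed.

Lemma intrF_inj : injective (intr : int -> F).
Proof.
move=> a b /= e; apply/eqP; rewrite -(inj_eq (@polyC_inj _)) -tofrac_eq.
have h c : (c%:P)%:F = c%:~R :> F by rewrite -[c in c%:P]intz !rmorph_int.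
by rewrite !h e.
Qed.

Lemma si_mulX q : subst_inv q * tt ^+ (size q).-1 =
   (\poly_(i < size q) q`_((size q).-1 - i))%:F.
Proof.
rewrite si_E horner_coef size_map_inj_poly; last 2 first.
- exact: intrF_inj.
- by [].
rewrite mulr_suml poly_def rmorph_sum /=.
rewrite (reindex_inj rev_ord_inj) /=.
apply: eq_bigr => i _.
rewrite coef_map /= -mul_polyC rmorphM /= rmorphXn /= -/tt.
have e1 : (size q - i.+1 = (size q).-1 - i)%N by rewrite subnS -!subn1 subnAC.
rewrite e1.
have h c : (c%:P)%:F = c%:~R :> F by rewrite -[c in c%:P]intz !rmorph_int.
rewrite h exprVn -mulrA; congr (_ * _).
rewrite mulrC -expfB_cond.
  by rewrite subKn // -ltnS (ltn_predK (ltn_ord i)).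
by rewrite (negPf tt_neq0) add0n leq_subr.
Qed.

Lemma si_eq0 q : (subst_inv q == 0) = (q == 0).
Proof.
apply/eqP/eqP => [h|->]; last by rewrite si_E rmorph0 horner0.
apply/eqP; apply: contraT => qn0.
have := si_mulX q; rewrite h mul0r => /esym/eqP; rewrite tofrac_eq0 => /eqP e.
have : (\poly_(i < size q) q`_((size q).-1 - i))`_0 = 0 by rewrite e coef0.
rewrite coef_poly size_poly_gt0 qn0 subn0 => /eqP.
by rewrite -/(lead_coef q) lead_coef_eq0 (negPf qn0).
Qed.
Lemma si_neq0 q : q != 0 -> subst_inv q != 0.
Proof. by rewrite si_eq0. Qed.
Lemma siN p : subst_inv (- p) = - subst_inv p.
Proof. by rewrite !si_E rmorphN hornerN. Qed.

Lemma barE (a b : {poly int}) : b != 0 -> bar (a%:F / b%:F) = subst_inv a / subst_inv b.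
Proof.
move=> bn0; rewrite /bar.
set x := a%:F / b%:F.
have hd : (\d_(repr x)) != 0 := denom_ratioP _.
have ex := fracE x.
have e : a * \d_(repr x) = \n_(repr x) * b.
  have hdF : (\d_(repr x))%:F != 0 by rewrite tofrac_eq0.
  have hbF : b%:F != 0 by rewrite tofrac_eq0.
  move: ex; rewrite {1}/x => /eqP; rewrite (eqr_div _ _ hbF hdF).
  by rewrite -!rmorphM tofrac_eq => /eqP.
have sd := si_neq0 _ hd; have sb := si_neq0 _ bn0.
apply/eqP; rewrite (eqr_div _ _ sd sb) -!siM; apply/eqP; congr subst_inv.
by rewrite e.
Qed.

Lemma barD x y : bar (x + y) = bar x + bar y.
Proof.
rewrite [x]fracE [y]fracE.
set a := \n_ _; set b := \d_ _; set c := \n_ _; set d := \d_ _.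
have hb : b != 0 := denom_ratioP _. have hd : d != 0 := denom_ratioP _.
have hbF : b%:F != 0 by rewrite tofrac_eq0.
have hdF : d%:F != 0 by rewrite tofrac_eq0.
have hbd : b * d != 0 := mulf_neq0 hb hd.
have -> : a%:F / b%:F + c%:F / d%:F = (a * d + c * b)%:F / (b * d)%:F.
  by rewrite rmorphD !rmorphM /= (addf_div _ _ hbF hdF).
rewrite (barE _ _ hbd) (barE _ _ hb) (barE _ _ hd) siD !siM.
by rewrite (addf_div _ _ (si_neq0 _ hb) (si_neq0 _ hd)).
Qed.

Lemma barN x : bar (- x) = - bar x.
Proof.
rewrite [x]fracE.
set a := \n_ _; set b := \d_ _.
have hb : b != 0 := denom_ratioP _.
by rewrite -mulNr -rmorphN /= !(barE _ _ hb) siN mulNr.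
Qed.

Lemma barM x y : bar (x * y) = bar x * bar y.
Proof.
rewrite [x]fracE [y]fracE.
set a := \n_ _; set b := \d_ _; set c := \n_ _; set d := \d_ _.
have hb : b != 0 := denom_ratioP _. have hd : d != 0 := denom_ratioP _.
have hbd : b * d != 0 := mulf_neq0 hb hd.
have -> : a%:F / b%:F * (c%:F / d%:F) = (a * c)%:F / (b * d)%:F.
  by rewrite !rmorphM /= mulf_div.
rewrite (barE _ _ hbd) (barE _ _ hb) (barE _ _ hd) !siM.
by rewrite mulf_div.
Qed.

Lemma bar_frac p : bar p%:F = subst_inv p.
Proof.
have := barE p 1 (oner_neq0 _); rewrite rmorph1 invr1 mulr1 => ->.
by rewrite si1 invr1 mulr1.
Qed.

Lemma bar1 : bar 1 = 1.
Proof. by rewrite -(rmorph1 (@FracField.tofrac _)) bar_frac si1. Qed.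

Lemma bar_zmod : zmod_morphism bar.
Proof. by move=> x y; rewrite barD barN. Qed.
Lemma bar_monoid : monoid_morphism bar.
Proof. by split; [exact: bar1| exact: barM]. Qed.

HB.instance Definition _ := GRing.isZmodMorphism.Build F F bar bar_zmod.
HB.instance Definition _ := GRing.isMonoidMorphism.Build F F bar bar_monoid.

Lemma bar_tt : bar tt = tt^-1.
Proof. by rewrite /tt bar_frac siX. Qed.

Lemma bar_si p : bar (subst_inv p) = p%:F.
Proof.
elim/poly_ind: p => [|p c IH]; first by rewrite si_E rmorph0 horner0 rmorph0 rmorph0.
rewrite siD siM siX siC rmorphD rmorphM /= IH fmorphV /= bar_tt invrK rmorph_int.
by rewrite rmorphD rmorphM /= -[c in c%:P]intz !rmorph_int.
Qed.

Lemma barK x : bar (bar x) = x.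
Proof.
rewrite [in RHS](fracE x) {1}(fracE x).
set a := \n_ _; set b := \d_ _.
have hb : b != 0 := denom_ratioP _.
by rewrite (barE _ _ hb) rmorphM fmorphV /= !bar_si.
Qed.

Lemma ttX_neq0 n : tt ^+ n != 0.
Proof. exact: expf_neq0 tt_neq0. Qed.

Lemma ttXE n : tt ^+ n = ('X^n)%:F.
Proof. by rewrite rmorphXn. Qed.

Lemma laurentF p : laurent p%:F.
Proof. by exists 0%N, p; rewrite expr0 divr1. Qed.

Lemma laurent0 : laurent 0.
Proof. by rewrite -(rmorph0 (@FracField.tofrac _)); apply: laurentF. Qed.
Lemma laurent1 : laurent 1.
Proof. by rewrite -(rmorph1 (@FracField.tofrac _)); apply: laurentF. Qed.
Lemma laurent_tt : laurent tt.
Proof. exact: laurentF. Qed.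
Lemma laurent_ttV : laurent tt^-1.
Proof. by exists 1%N, 1; rewrite rmorph1 expr1 div1r. Qed.

Lemma laurentD x y : laurent x -> laurent y -> laurent (x + y).
Proof.
move=> [n [p ->]] [m [q ->]]; exists (n + m)%N, (p * 'X^m + q * 'X^n).
rewrite rmorphD !rmorphM /= -!ttXE exprD.
exact: (addf_div _ _ (ttX_neq0 n) (ttX_neq0 m)).
Qed.

Lemma laurentN x : laurent x -> laurent (- x).
Proof. by move=> [n [p ->]]; exists n, (- p); rewrite rmorphN mulNr. Qed.

Lemma laurentB x y : laurent x -> laurent y -> laurent (x - y).
Proof. by move=> hx hy; apply: laurentD => //; apply: laurentN. Qed.

Lemma laurentM x y : laurent x -> laurent y -> laurent (x * y).
Proof.
move=> [n [p ->]] [m [q ->]]; exists (n + m)%N, (p * q).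
rewrite !rmorphM /= exprD.
exact: mulf_div.
Qed.

Lemma laurentX x n : laurent x -> laurent (x ^+ n).
Proof.
move=> hx; elim: n => [|n IH]; first by rewrite expr0; exact: laurent1.
by rewrite exprS; apply: laurentM.
Qed.

Lemma laurent_ttXV n : laurent (tt ^- n).
Proof. by rewrite -exprVn; apply: laurentX; exact: laurent_ttV. Qed.

Lemma laurent_int (c : int) : laurent c%:~R.
Proof.
have -> : (c%:~R : F) = (c%:P)%:F by rewrite -[c in c%:P]intz !rmorph_int.
exact: laurentF.
Qed.

Lemma laurent_sum (I : finType) (f : I -> F) :
  (forall i, laurent (f i)) -> laurent (\sum_i f i).
Proof.
move=> h; apply: (big_ind laurent) => //; [exact: laurent0| exact: laurentD].
Qed.

Lemma laurent_si p : laurent (subst_inv p).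
Proof.
exists (size p).-1, (\poly_(i < size p) p`_((size p).-1 - i)).
by rewrite -si_mulX mulfK // ttX_neq0.
Qed.

Lemma laurent_bar x : laurent x -> laurent (bar x).
Proof.
move=> [n [p ->]]; rewrite rmorphM /= fmorphV /= rmorphXn /= bar_frac bar_tt.
by apply: laurentM; [exact: laurent_si| rewrite exprVn invrK; apply: laurentX; exact: laurent_tt].
Qed.

Lemma laurent_ntz (k : int) : laurent ((- tt) ^ k).
Proof.
case: k => n.
  by rewrite -exprnP; apply: laurentX; apply: laurentN; exact: laurent_tt.
rewrite NegzE -invr_expz -exprnP -exprVn invrN.
by apply: laurentX; apply: laurentN; exact: laurent_ttV.
Qed.

Lemma s_neq0 : 1 + tt != 0.
Proof.
have -> : 1 + tt = (1 + 'X)%:F by rewrite rmorphD rmorph1.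
rewrite tofrac_eq0.
apply/eqP => /(congr1 (fun p : {poly int} => p`_1)).
by rewrite coefD coef1 coefX coef0.
Qed.

Lemma P_neq0 : 1 + tt + tt ^+ 2 != 0.
Proof.
have -> : 1 + tt + tt ^+ 2 = (1 + 'X + 'X ^+ 2)%:F by rewrite !rmorphD rmorph1 rmorphXn.
rewrite tofrac_eq0.
apply/eqP => /(congr1 (fun p : {poly int} => p`_2)).
by rewrite !coefD coef1 coefX coefXn coef0.
Qed.

Lemma u_neq0 (k : int) : (- tt) ^ k != 0.
Proof. by rewrite expfz_neq0 // oppr_eq0 tt_neq0. Qed.

Lemma L2n m : laurent ((1 - (- tt) ^+ m) / (1 + tt)).
Proof.
have := subrXX 1 (- tt) m; rewrite expr1n opprK => ->.
rewrite [X in laurent X]mulrC (mulKf s_neq0).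
apply: laurent_sum => i; apply: laurentM; first by rewrite expr1n; exact: laurent1.
by apply: laurentX; apply: laurentN; exact: laurent_tt.
Qed.

Lemma L2z k : laurent ((1 - (- tt) ^ k) / (1 + tt)).
Proof.
have := laurent_ntz k.
case: k => n; first by rewrite -exprnP => _; exact: L2n.
rewrite NegzE -invr_expz -exprnP => hw.
set w := (- tt) ^+ n.+1.
have w0 : w != 0 by rewrite expf_neq0 // oppr_eq0 tt_neq0.
rewrite (gL2z w0 s_neq0).
by apply: laurentM; [apply: laurentN | exact: L2n].
Qed.

Lemma frac_int (c : int) : (c%:P)%:F = c%:~R :> F.
Proof. by rewrite -[c in c%:P]intz !rmorph_int. Qed.

Lemma Lpoly p : laurent ((p%:F - subst_inv p) / (1 + tt)).
Proof.
elim/poly_ind: p => [|p c IH].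
  by rewrite rmorph0 si_E rmorph0 horner0 subrr mul0r; exact: laurent0.
rewrite rmorphD rmorphM /= siD siM siX siC frac_int -/tt.
have t0 := tt_neq0; have s0 := s_neq0.
rewrite (gLpoly _ _ _ t0 s0).
apply: laurentD; apply: laurentM => //; first exact: laurent_tt.
  exact: laurent_si.
by apply: laurentB; [exact: laurent1| exact: laurent_ttV].
Qed.

Lemma L1 x : laurent x -> laurent ((x - bar x) / (1 + tt)).
Proof.
move=> [n [p ->]].
rewrite rmorphM /= fmorphV /= rmorphXn /= bar_frac bar_tt exprVn invrK.
set w := tt ^+ n.
have w0 : w != 0 by exact: ttX_neq0.
have s0 := s_neq0.
have ew : w ^+ 2 = (- tt) ^+ (2 * n).
  by rewrite exprM sqrrN -exprM mulnC exprM.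
rewrite (gL1 _ _ w0 s0).
rewrite ew.
apply: laurentD; apply: laurentM.
- exact: laurent_ttXV.
- exact: Lpoly.
- by apply: laurentM; [exact: laurent_si| exact: laurent_ttXV].
- exact: L2n.
Qed.

Lemma bar_u (k : int) : bar ((- tt) ^ k) = ((- tt) ^ k)^-1.
Proof.
rewrite fmorphXz rmorphN /= bar_tt -invrN.
by rewrite exprz_inv invr_expz.
Qed.

Lemma laurent_det n (M : 'M[F]_n) : (forall i j, laurent (M i j)) -> laurent (\det M).
Proof.
move=> h; rewrite /determinant.
apply: (big_ind laurent); [exact: laurent0| exact: laurentD|] => s _.
apply: laurentM.
  by apply: laurentX; apply: laurentN; exact: laurent1.
by apply: (big_ind laurent); [exact: laurent1| exact: laurentM| move=> i _; exact: h].
Qed.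

Definition Phi : {poly int} := 'X^2 + ('X + 1).

Lemma PhiF : Phi%:F = 1 + tt + tt ^+ 2.
Proof. by rewrite /Phi !rmorphD rmorphXn rmorph1 /= -/tt addrC [tt + 1]addrC. Qed.

Lemma size_Phi : size Phi = 3%N.
Proof. by rewrite /Phi size_addl ?size_polyXn // size_XaddC. Qed.

Lemma monic_Phi : Phi \is monic.
Proof.
by rewrite monicE /Phi lead_coefDl ?lead_coefXn // size_polyXn size_XaddC.
Qed.

Lemma evalC_Phi (z : algC) : (map_poly intr Phi).[z] = z ^+ 2 + z + 1.
Proof.
by rewrite /Phi !rmorphD /= rmorph1 map_polyXn map_polyX hornerD hornerXn hornerD hornerX hornerC addrA.
Qed.

Lemma h_laurent (g : F) (zeta : algC) n p : zeta ^+ 2 + zeta + 1 = 0 ->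
  g = p%:F / tt ^+ n ->
  (map_poly (fun c : int => c%:~R : algC) p).[zeta] / zeta ^+ n = 1 ->
  laurent ((g - 1) / (1 + tt + tt ^+ 2)).
Proof.
move=> hz -> hev.
have z0 : zeta != 0.
  by apply/eqP => z0; move: hz; rewrite z0 expr0n /= !add0r => /eqP; rewrite oner_eq0.
have hp : (map_poly intr p).[zeta] = zeta ^+ n.
  have := congr1 (fun x => x * zeta ^+ n) hev; rewrite mul1r mulfVK //.
  exact: expf_neq0.
set q := p - 'X^n.
have hq := Pdiv.RingMonic.rdivp_eq monic_Phi q.
set d := Pdiv.Ring.rdivp q Phi in hq; set r := Pdiv.Ring.rmodp q Phi in hq.
have sr : (size r <= 2)%N.
  have := Pdiv.Ring.ltn_rmodpN0 q (monic_neq0 monic_Phi); rewrite size_Phi.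
  by rewrite -/r.
have hr : (map_poly intr r).[zeta] = 0.
  have := congr1 (fun P => (map_poly intr P).[zeta]) hq.
  rewrite /= /q rmorphB /= map_polyXn hornerD hornerN hornerXn hp subrr.
  rewrite rmorphD rmorphM /= hornerD hornerM evalC_Phi hz mulr0 add0r.
  by move=> <-.
have r0 : r = 0.
  move: hr; rewrite (@horner_coef_wide _ 2); last first.
    by rewrite (size_map_inj_poly (@intr_inj _)) ?rmorph0.
  rewrite !big_ord_recr big_ord0 /= add0r !coef_map /= expr0 mulr1 expr1 => e.
  have [e0 e1] := gR hz e.
  apply/polyP => i; rewrite coef0.
  case: i => [|[|i]] //; apply: nth_default; exact: (leq_trans sr).
move: hq; rewrite r0 addr0 => hq.
have hqF : p%:F - tt ^+ n = d%:F * Phi%:F.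
  by rewrite -rmorphM -hq /q rmorphB rmorphXn.
rewrite -PhiF (gH (ttX_neq0 n) _ hqF).
  by apply: laurentM; [exact: laurentF| exact: laurent_ttXV].
by rewrite PhiF P_neq0.
Qed.

Lemma onlyif_eval (g a : F) (zeta : algC) : zeta ^+ 2 + zeta + 1 = 0 ->
  laurent g -> laurent a ->
  g = (a * (1 + tt + tt ^+ 2) - 1) / (tt * (1 + tt)) -> laurent_eval zeta g 1.
Proof.
move=> hz [n [p ep]] [m [q eq]] e.
exists n, p; split; first exact: ep.
have e' : p%:F / tt ^+ n = (q%:F / tt ^+ m * (1 + tt + tt ^+ 2) - 1) / (tt * (1 + tt)).
  by rewrite -ep -eq.
have E := gE (ttX_neq0 n) (ttX_neq0 m) tt_neq0 s_neq0 e'.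
have Ep : p * 'X^m * ('X * (1 + 'X)) = q * Phi * 'X^n - 'X^n * 'X^m.
  apply/eqP; rewrite -tofrac_eq; apply/eqP.
  rewrite !rmorphB !rmorphM !rmorphD rmorph1 !rmorphXn /= -/tt.
  by rewrite (addrC (tt ^+ 2)) (addrC tt 1).
have := congr1 (fun P => (map_poly intr P).[zeta]) Ep.
rewrite /= rmorphB !rmorphM /= rmorphD rmorph1 !map_polyXn map_polyX /=.
rewrite hornerD hornerN !hornerM hornerD hornerC hornerX !hornerXn evalC_Phi.
rewrite map_polyX hornerX => h; exact: (gZ hz h).
Qed.

Lemma phi_Amat g11 g12 k :
  phi (Amat tt ((- tt) ^ k) g11 g12 (bar g11) (bar g12)) = Mform g11 g12 k.
Proof.
have t0 := tt_neq0; have s0 := s_neq0; have P0 := P_neq0.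
apply/matrixP => i j; rewrite !mxE /gkl /fkl /=.
case: i => [[|[|?]] ?] //=; case: j => [[|[|?]] ?] //=; rewrite !mxE /=.
- exact: (gphi1 g11 t0 s0 P0).
- exact: (gphi2 g11 g12 t0 s0 P0).
- exact: (gphi3 ((- tt) ^ k) g11 (bar g12) t0 s0 P0).
- exact: (gphi4 ((- tt) ^ k) g11 g12 (bar g11) (bar g12) t0 s0 P0).
Qed.

Lemma laurent_adj (c : F) (M : 'M[F]_3) : laurent c ->
  (forall i j, laurent (M i j)) -> forall i j, laurent ((c *: \adj M) i j).
Proof.
move=> hc hM i j; rewrite !mxE /cofactor.
apply: laurentM; first exact: hc.
apply: laurentM; first by apply: laurentX; apply: laurentN; exact: laurent1.
by apply: laurent_det => a b; rewrite !mxE; exact: hM.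
Qed.

Ltac lau := repeat first [ assumption | apply: laurent1 | apply: laurent_tt
  | apply: laurent_ttV | apply: laurent_ttXV | apply: laurentB | apply: laurentD
  | apply: laurentN | apply: laurentX | apply: laurentM ].

Theorem lemma3p11 (g11 g12 : F) (k : int) (zeta : algC) :
  laurent g11 -> laurent g12 ->
  inGL (Mform g11 g12 k) ->
  \det (Mform g11 g12 k) = (- tt) ^ k ->
  zeta ^+ 2 + zeta + 1 = 0 ->
  (in_phiB (Mform g11 g12 k) <-> laurent_eval zeta g11 1).
Proof.
move=> hl11 hl12 hGL hdet hz.
have t0 := tt_neq0; have s0 := s_neq0; have P0 := P_neq0; have u0 := u_neq0 k.
have D : g11 * bar g11 + (tt + 1 + tt^-1) * g12 * bar g12 = 1.
  move: hdet; rewrite (expand_det_row _ ord0) !big_ord_recr big_ord0 /= /cofactor.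
  rewrite !det_mx11 !mxE /=.
  exact: gD.
split.
  case=> A [[[hAl _] _] hphi].
  have e := congr1 (fun M : 'M[F]_2 => M ord0 ord0) hphi.
  move: e; rewrite /phi !mxE /= /gkl /fkl /= => e.
  exact: (@onlyif_eval g11 (A i0 i0) zeta hz hl11 (hAl i0 i0) (esym e)).
case=> n [p [ep ev]].
have hh := @h_laurent g11 zeta n p hz ep ev.
move: hh; set h := (g11 - 1) / (1 + tt + tt ^+ 2) => hh.
have eg : g11 = 1 + (1 + tt + tt ^+ 2) * h := eq_hP g11 P0.
have hbl := laurent_bar _ hh.
have egb : bar g11 = 1 + (1 + tt^-1 + tt^-1 ^+ 2) * bar h.
  by rewrite {1}eg rmorphD rmorphM /= rmorph1 !rmorphD rmorphXn rmorph1 /= bar_tt.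
clearbody h.
have hbb := laurent_bar _ hl12.
set u := (- tt) ^ k in u0 *.
have lu : laurent u := laurent_ntz k.
have L11 : laurent (e11 tt g11).
  rewrite eg (e11h h P0); by lau.
have L12 : laurent (e12 tt g11 g12).
  rewrite eg (e12h h g12 s0 P0); by lau.
have L21 : laurent (e21 tt u g11 (bar g12)).
  rewrite eg (e21h u h (bar g12) t0 P0); by lau.
have L22 : laurent (e22 tt u g11 g12 (bar g11) (bar g12)).
  rewrite egb eg (e22h u h (bar h) g12 (bar g12) t0 s0 P0).
  have l1 := L2z k; have l2 := L1 _ hl12; have l3 := L1 _ hh.
  rewrite -/u in l1.
  by lau.
set A := Amat tt u g11 g12 (bar g11) (bar g12).
have hAl : forall i j, laurent (A i j).
  move=> i j; rewrite /A !mxE.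
  case: i => [[|[|[|?]]] ?] //=; case: j => [[|[|[|?]]] ?] //=; by lau.
have hdA : \det A = u := detA t0 u0 s0 P0 D.
have hGA : inGL A.
  split; first exact: hAl.
  exists (u^-1 *: \adj A); split; [|split].
  - apply: laurent_adj hAl; by rewrite /u invr_expz; exact: laurent_ntz.
  - by rewrite -scalemxAr mul_mx_adj hdA scale_scalar_mx (mulVf u0).
  - by rewrite -scalemxAl mul_adj_mx hdA scale_scalar_mx (mulVf u0).
exists A; split; last exact: phi_Amat.
split; first exact: hGA.
split; first exact: (vA u g11 g12 (bar g11) (bar g12) t0 s0 P0).
split; first exact: (Aones u g11 g12 (bar g11) (bar g12) t0 s0 P0).
rewrite /barmx /A map_Amat /= bar_tt /u bar_u !barK -/u.
exact: (unitA t0 u0 s0 P0 D).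
Qed.
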